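(* Let $k$ be a kernel on $\mathcal{X}$, $\sigma>0$, $f\in\mathcal{H}_k$, $g\in\mathcal{H}_{\sigma^2\delta}$, $h=f+g\in\mathcal{H}_{k^\sigma}$. Let $x_1,\dots,x_t\in\mathcal{X}$ be pairwise distinct with observations $y_i=h(x_i)$. Then for every $x\in\mathcal{X}\setminus\{x_1,\dots,x_t\}$, $$|\widehat m_t(x)-f(x)|\le\|h\|_{\mathcal{H}_{k^\sigma}}\widehat\sigma_t(x)+\big(\|h\|_{\mathcal{H}_{k^\sigma}}+\|g\|_{\mathcal{H}_{\sigma^2\delta}}\big)\sigma.$$
   Context: $\delta(x,y)=1$ if $x=y$, else $0$; $k^\sigma=k+\sigma^2\delta$; $\mathcal{H}_{\sigma^2\delta}$ is the RKHS of $\sigma^2\delta$. $\mathbf{k}_t(x)=[k(x,x_i)]_{i\le t}$, $\mathbf{K}_t=[k(x_i,x_j)]_{i,j\le t}$, $\mathbf{y}_t=[y_i]_{i\le t}$, $\widehat m_t(x)=\mathbf{k}_t(x)^T(\mathbf{K}_t+\sigma^2I)^{-1}\mathbf{y}_t$, $\widehat\sigma_t^2(x)=k(x,x)-\mathbf{k}_t(x)^T(\mathbf{K}_t+\sigma^2I)^{-1}\mathbf{k}_t(x)$. *)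

(* Defs.v *)
From Stdlib Require Import Reals Lra ClassicalEpsilon FunctionalExtensionality.
From HB Require Import structures.
From mathcomp Require Import all_boot all_order all_algebra.

Set Implicit Arguments. Unset Strict Implicit. Unset Printing Implicit Defensive.

Local Open Scope R_scope.
Definition Req_bool (x y : R) : bool := if Req_EM_T x y then true else false.
Lemma Req_boolP : Equality.axiom Req_bool.
Proof. move=> x y; rewrite /Req_bool; case: Req_EM_T => h; by constructor. Qed.
HB.instance Definition _ := hasDecEq.Build R Req_boolP.

Definition R_find (P : pred R) (n : nat) : option R :=
  match excluded_middle_informative (exists x, P x) with
  | left h => Some (proj1_sig (constructive_indefinite_description _ h))
  | right _ => None end.
Lemma R_find_correct P n x : R_find P n = Some x -> P x.
Proof. rewrite /R_find; case: excluded_middle_informative => // h [<-].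
  exact: proj2_sig (constructive_indefinite_description _ h). Qed.
Lemma R_find_complete (P : pred R) : (exists x, P x) -> exists n, R_find P n.
Proof. move=> h; exists 0%N; rewrite /R_find; case: excluded_middle_informative => //. Qed.
Lemma R_find_ext (P Q : pred R) : P =1 Q -> R_find P =1 R_find Q.
Proof. move=> /functional_extensionality -> //. Qed.
HB.instance Definition _ := hasChoice.Build R R_find_correct R_find_complete R_find_ext.

Lemma R_addA : ssrfun.associative Rplus. Proof. move=> *; lra. Qed.
Lemma R_addC : ssrfun.commutative Rplus. Proof. move=> *; lra. Qed.
Lemma R_add0 : ssrfun.left_id 0 Rplus. Proof. move=> *; lra. Qed.
Lemma R_addN : ssrfun.left_inverse 0 Ropp Rplus. Proof. move=> *; lra. Qed.
HB.instance Definition _ := GRing.isZmodule.Build R R_addA R_addC R_add0 R_addN.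
Lemma R_mulA : ssrfun.associative Rmult. Proof. move=> *; ring. Qed.
Lemma R_mulC : ssrfun.commutative Rmult. Proof. move=> *; ring. Qed.
Lemma R_mul1 : ssrfun.left_id 1 Rmult. Proof. move=> *; ring. Qed.
Lemma R_mulDl : ssrfun.left_distributive Rmult Rplus. Proof. move=> *; ring. Qed.
Lemma R_one_neq0 : (1 : R) != 0.
Proof. apply/eqP; exact: R1_neq_R0. Qed.
HB.instance Definition _ := GRing.Zmodule_isComNzRing.Build R R_mulA R_mulC R_mul1 R_mulDl R_one_neq0.
Definition R_inv (x : R) : R := if Req_EM_T x 0 then 0 else Rinv x.
Lemma R_mulVf (x : R) : x != 0 -> Rmult (R_inv x) x = 1.
Proof. move=> /eqP hx; rewrite /R_inv; destruct (Req_EM_T x 0) as [e|n]; [exfalso; exact: hx e | exact: Rinv_l]. Qed.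
Lemma R_inv0 : R_inv 0 = 0.
Proof. rewrite /R_inv; destruct (Req_EM_T 0 0) as [e|n]; [reflexivity | exfalso; exact: n]. Qed.
HB.instance Definition _ := GRing.ComNzRing_isField.Build R R_mulVf R_inv0.


Definition is_kernel (X : Type) (k : X -> X -> R) : Prop :=
  (forall x y, k x y = k y x) /\
  (forall (n : nat) (xs : 'I_n -> X) (c : 'I_n -> R),
      Rle 0 (\sum_(i < n) \sum_(j < n) c i * c j * k (xs i) (xs j))%R).

(* A reproducing kernel Hilbert space of real functions on X with reproducing
   kernel k: a linear space of functions [rk_mem] with an inner product [rk_ip]
   (symmetric, bilinear, positive definite on [rk_mem]), complete for the induced
   norm, containing every k(.,x) and satisfying <f, k(.,x)> = f x.
   (By the Moore-Aronszajn theorem such a space, when it exists, is unique: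
   it is H_k.) *)
Record RKHS (X : Type) (k : X -> X -> R) := {
  rk_mem : (X -> R) -> Prop;
  rk_ip : (X -> R) -> (X -> R) -> R;
  rk_mem_add : forall f g, rk_mem f -> rk_mem g -> rk_mem (fun z => f z + g z);
  rk_mem_scal : forall (a : R) f, rk_mem f -> rk_mem (fun z => a * f z);
  rk_ip_sym : forall f g, rk_mem f -> rk_mem g -> rk_ip f g = rk_ip g f;
  rk_ip_add_l : forall f g u, rk_mem f -> rk_mem g -> rk_mem u ->
      rk_ip (fun z => f z + g z) u = rk_ip f u + rk_ip g u;
  rk_ip_scal_l : forall (a : R) f u, rk_mem f -> rk_mem u ->
      rk_ip (fun z => a * f z) u = a * rk_ip f u;
  rk_ip_pos : forall f, rk_mem f -> 0 <= rk_ip f f;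
  rk_ip_def : forall f, rk_mem f -> rk_ip f f = 0 -> forall z, f z = 0;
  rk_complete : forall u : nat -> X -> R, (forall n, rk_mem (u n)) ->
      (forall eps, 0 < eps -> exists N, forall m n, (N <= m)%nat -> (N <= n)%nat ->
          sqrt (rk_ip (fun z => u m z - u n z) (fun z => u m z - u n z)) < eps) ->
      exists f, rk_mem f /\
        (forall eps, 0 < eps -> exists N, forall n, (N <= n)%nat ->
          sqrt (rk_ip (fun z => u n z - f z) (fun z => u n z - f z)) < eps);
  rk_mem_kernel : forall x, rk_mem (fun z => k z x);
  rk_reproducing : forall f x, rk_mem f -> rk_ip f (fun z => k z x) = f x
}.

Definition rkhs_norm (X : Type) (k : X -> X -> R) (H : RKHS k) (f : X -> R) : R :=
  sqrt (rk_ip H f f).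

Definition delta (X : Type) (x y : X) : R :=
  if excluded_middle_informative (x = y) then 1 else 0.

Definition sigma2_delta (X : Type) (sigma : R) (x y : X) : R := sigma ^ 2 * delta x y.

Definition ksigma (X : Type) (k : X -> X -> R) (sigma : R) (x y : X) : R :=
  k x y + sigma ^ 2 * delta x y.

Definition gram (X : Type) (k : X -> X -> R) (t : nat) (xs : 'I_t -> X) : 'M[R]_t :=
  \matrix_(i, j) k (xs i) (xs j).

Definition kvec (X : Type) (k : X -> X -> R) (t : nat) (xs : 'I_t -> X) (x : X) : 'cV[R]_t :=
  \col_i k x (xs i).

Definition post_mean (X : Type) (k : X -> X -> R) (sigma : R) (t : nat)
    (xs : 'I_t -> X) (ys : 'cV[R]_t) (x : X) : R :=
  ((kvec k xs x)^T *m invmx (gram k xs + (pow sigma 2)%:M) *m ys)%R ord0 ord0.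

Definition post_var (X : Type) (k : X -> X -> R) (sigma : R) (t : nat)
    (xs : 'I_t -> X) (x : X) : R :=
  k x x - ((kvec k xs x)^T *m invmx (gram k xs + (pow sigma 2)%:M) *m kvec k xs x)%R ord0 ord0.

(* Main.v *)
Require Import Defs.
From Stdlib Require Import Reals Lra FunctionalExtensionality ClassicalEpsilon.
From HB Require Import structures.
From mathcomp Require Import all_boot all_order all_algebra.
Import GRing.Theory.
Local Open Scope R_scope.

Lemma addRE (a b : R) : (a + b)%R = Rplus a b. Proof. by []. Qed.
Lemma mulRE (a b : R) : (a * b)%R = Rmult a b. Proof. by []. Qed.
Lemma oppRE (a : R) : (- a)%R = Ropp a. Proof. by []. Qed.
Lemma zeroRE : (0%R : R) = R0. Proof. by []. Qed.
Ltac toR := rewrite ?addRE ?mulRE ?oppRE ?zeroRE.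
Ltac fixeq := match goal with |- @eq _ ?a ?b => change (@eq R a b) end.

Section H.
Variables (X : Type) (kk : X -> X -> R) (H : RKHS kk).

Lemma zero_mem (x0 : X) : rk_mem H (fun _ => 0).
Proof.
have := rk_mem_scal (r:=H) 0 (rk_mem_kernel H x0).
have -> : (fun z => 0 * kk z x0) = (fun _ => 0) by apply: functional_extensionality => z; ring.
by [].
Qed.

Lemma zero_ip u : rk_mem H u -> rk_ip H (fun _ => 0) u = 0.
Proof.
move=> hu; have := rk_ip_scal_l (r:=H) 0 hu hu.
have -> : (fun z => 0 * u z) = (fun _ => 0) by apply: functional_extensionality => z; ring.
move=> ->; ring.
Qed.

Lemma sum_lin (x0 : X) (I : Type) (s : seq I) (c : I -> R) (F : I -> X -> R) u :
  (forall i, rk_mem H (F i)) -> rk_mem H u ->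
  rk_mem H (fun z => (\sum_(i <- s) c i * F i z)%R) /\
  rk_ip H (fun z => (\sum_(i <- s) c i * F i z)%R) u = (\sum_(i <- s) c i * rk_ip H (F i) u)%R.
Proof.
move=> hF hu; elim: s => [|a s [IHm IHi]].
  have -> : (fun z => (\sum_(i <- [::]) c i * F i z)%R) = (fun _ => 0).
    by apply: functional_extensionality => z; rewrite big_nil.
  rewrite big_nil; split; [exact: zero_mem x0 | exact: zero_ip].
have -> : (fun z => (\sum_(i <- a :: s) c i * F i z)%R) =
   (fun z => (fun z => c a * F a z) z + (fun z => (\sum_(i <- s) c i * F i z)%R) z).
  by apply: functional_extensionality => z; rewrite big_cons.
split; first by apply: rk_mem_add => //; apply: rk_mem_scal.
rewrite rk_ip_add_l //; last by apply: rk_mem_scal.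
by rewrite rk_ip_scal_l // IHi big_cons.
Qed.

Lemma quad_CS (A B C : R) : 0 <= A -> 0 <= B ->
  (forall c, 0 <= A + 2 * c * C + c * c * B) -> C * C <= A * B.
Proof.
move=> hA hB hq.
destruct (Rle_lt_or_eq_dec 0 B hB) as [hB'|hB'].
  have := hq (- C / B).
  have -> : A + 2 * (- C / B) * C + (- C / B) * (- C / B) * B = A - C * C / B by field; lra.
  move=> h.
  have : 0 <= (A - C * C / B) * B by apply: Rmult_le_pos; lra.
  have -> : (A - C * C / B) * B = A * B - C * C by field; lra.
  lra.
subst B.
destruct (Req_dec C 0) as [->|hC]; first lra.
have := hq (- (A + 1) / (2 * C)).
have -> : A + 2 * (- (A + 1) / (2 * C)) * C + (- (A + 1) / (2 * C)) * (- (A + 1) / (2 * C)) * 0 = -1 by field.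
lra.
Qed.

Lemma CS a b : rk_mem H a -> rk_mem H b ->
  Rabs (rk_ip H a b) <= sqrt (rk_ip H a a) * sqrt (rk_ip H b b).
Proof.
move=> ha hb.
have hq : forall c, 0 <= rk_ip H a a + 2 * c * rk_ip H a b + c * c * rk_ip H b b.
  move=> c.
  have hcb : rk_mem H (fun z => c * b z) by apply: rk_mem_scal.
  have hw : rk_mem H (fun z => a z + c * b z).
    exact: (rk_mem_add ha hcb).
  have := rk_ip_pos (r:=H) hw.
  rewrite (rk_ip_add_l (r:=H) ha hcb hw) (rk_ip_scal_l (r:=H) c hb hw).
  rewrite (rk_ip_sym (r:=H) ha hw) (rk_ip_sym (r:=H) hb hw).
  rewrite (rk_ip_add_l (r:=H) ha hcb ha) (rk_ip_scal_l (r:=H) c hb ha).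
  rewrite (rk_ip_add_l (r:=H) ha hcb hb) (rk_ip_scal_l (r:=H) c hb hb).
  rewrite (rk_ip_sym (r:=H) hb ha). nra.
have hA := rk_ip_pos (r:=H) ha; have hB := rk_ip_pos (r:=H) hb.
have hC := @quad_CS _ _ _ hA hB hq.
rewrite -sqrt_mult //.
rewrite -(sqrt_Rsqr_abs).
apply: sqrt_le_1_alt. rewrite /Rsqr; lra.
Qed.
End H.

Lemma sqrt_add_sq (a s : R) : 0 <= s -> sqrt (a + s ^ 2) <= sqrt a + s.
Proof.
move=> hs.
destruct (Rlt_or_le a 0) as [ha|ha].
  have h1 : sqrt (a + s ^ 2) <= sqrt (s ^ 2) by apply: sqrt_le_1_alt; lra.
  rewrite sqrt_pow2 // in h1. have := sqrt_pos a. lra.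
have hsa := sqrt_pos a.
rewrite -(sqrt_pow2 (sqrt a + s)); last lra.
apply: sqrt_le_1_alt.
have : (sqrt a + s) ^ 2 = sqrt a * sqrt a + 2 * s * sqrt a + s ^ 2 by ring.
rewrite sqrt_sqrt //. nra.
Qed.

Lemma sum_ge0 (I : Type) (s : seq I) (P : pred I) (F : I -> R) :
  (forall i, 0 <= F i) -> 0 <= (\sum_(i <- s | P i) F i)%R.
Proof.
move=> hF; elim: s => [|a s IH]; first by rewrite big_nil; toR; lra.
rewrite big_cons; case: (P a) => //; exact: Rplus_le_le_0_compat (hF a) IH.
Qed.

Lemma sum_ge_term t (F : 'I_t -> R) i0 :
  (forall i, 0 <= F i) -> F i0 <= (\sum_(i < t) F i)%R.
Proof.
move=> hF; rewrite (bigD1 i0) //=.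
have h := @sum_ge0 _ (index_enum 'I_t) (fun i => true && (i != i0)) F hF.
rewrite -{1}(Rplus_0_r (F i0)); exact: Rplus_le_compat_l _ _ _ h.
Qed.

Lemma aux_contra (Q T a s : R) : Q + s * T = 0 -> 0 <= Q -> a <= T -> 0 < s -> 0 < a -> False.
Proof. move=> *; nra. Qed.

Lemma Ks_unit (X : Type) (k : X -> X -> R) sigma t (xs : 'I_t -> X) :
  is_kernel k -> 0 < sigma -> (gram k xs + (pow sigma 2)%:M)%R \in unitmx.
Proof.
move=> [ksym kpsd] hs.
rewrite unitmxE unitfE; apply/negP => /det0P [w wn0 hw].
rewrite mulmxDr mul_mx_scalar in hw.
have hi : forall i, ((\sum_j w ord0 j * k (xs j) (xs i)) + pow sigma 2 * w ord0 i = 0)%R.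
  move=> i; move/matrixP: hw => /(_ ord0 i); rewrite !mxE.
  by under eq_bigr do rewrite mxE.
have h0 : (\sum_i w ord0 i * ((\sum_j w ord0 j * k (xs j) (xs i)) + pow sigma 2 * w ord0 i))%R = 0.
  by rewrite big1 // => i _; rewrite hi mulr0.
have hQ := kpsd t xs (fun i => w ord0 i).
have hsplit : (\sum_i w ord0 i * ((\sum_j w ord0 j * k (xs j) (xs i)) + pow sigma 2 * w ord0 i))%R =
   ((\sum_i \sum_j w ord0 i * w ord0 j * k (xs i) (xs j)) + pow sigma 2 * \sum_i w ord0 i * w ord0 i)%R.
  rewrite big_distrr -big_split /=; apply: eq_bigr => i _.
  rewrite mulrDr big_distrr /=; congr (_ + _)%R.
    by apply: eq_bigr => j _; rewrite ksym mulrA.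
  by rewrite mulrCA.
rewrite hsplit in h0.
case: (pickP (fun i => w ord0 i != 0%R)) => [i0 hi0 | hall]; last first.
  move/negP: wn0; apply; apply/eqP/rowP => i; rewrite mxE.
  by have := hall i => /= /negbFE /eqP.
have hsq : forall i : 'I_t, 0 <= (w ord0 i * w ord0 i)%R by move=> i; toR; nra.
have := @sum_ge_term t (fun i => w ord0 i * w ord0 i)%R i0 hsq.
have hne : w ord0 i0 <> 0 by move/eqP: hi0.
move: h0 hQ; toR => h0 hQ hT.
have : 0 < w ord0 i0 * w ord0 i0 by nra.
have : 0 < pow sigma 2 by nra.
move=> h1 h2; exact: (@aux_contra _ _ _ _ h0 hQ hT h1 h2).
Qed.

Lemma delta_sym (X : Type) (a b : X) : delta a b = delta b a.
Proof.
rewrite /delta; case: excluded_middle_informative => [e|n]; case: excluded_middle_informative => [e'|n'] //.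
  by exfalso; apply: n'; rewrite e.
by exfalso; apply: n; rewrite e'.
Qed.

Lemma delta_eq (X : Type) (a : X) : delta a a = 1.
Proof. by rewrite /delta; destruct (excluded_middle_informative (a = a)). Qed.
Lemma delta_neq (X : Type) (a b : X) : a <> b -> delta a b = 0.
Proof. by move=> n; rewrite /delta; destruct (excluded_middle_informative (a = b)). Qed.

Lemma aux_ee (a s c : R) : a + s + - c + 0 = a - c + s.
Proof. ring. Qed.

Lemma aux_final (hx m fx gx Nh Ng pv s : R) :
  Rabs (hx - m) <= Nh * sqrt (pv + s ^ 2) -> Rabs gx <= Ng * s ->
  sqrt (pv + s ^ 2) <= sqrt pv + s -> 0 <= Nh -> hx = fx + gx ->
  Rabs (m - fx) <= Nh * sqrt pv + (Nh + Ng) * s.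
Proof.
move=> h1 h2 h3 h4 h5.
have : Nh * sqrt (pv + s ^ 2) <= Nh * (sqrt pv + s) by apply: Rmult_le_compat_l.
have -> : m - fx = - (hx - m) + gx by rewrite h5; ring.
have := Rabs_triang (- (hx - m)) gx. rewrite Rabs_Ropp. nra.
Qed.

Theorem mainTheorem15 (X : Type) (k : X -> X -> R) (sigma : R)
    (Hk : RKHS k) (Hd : RKHS (sigma2_delta sigma)) (Hs : RKHS (ksigma k sigma))
    (f g h : X -> R) (t : nat) (xs : 'I_t -> X) (x : X) :
  is_kernel k -> 0 < sigma ->
  rk_mem Hk f -> rk_mem Hd g ->
  h = (fun z => f z + g z) -> rk_mem Hs h ->
  injective xs -> (forall i : 'I_t, x <> xs i) ->
  Rabs (post_mean k sigma xs (\col_i h (xs i)) x - f x)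
    <= rkhs_norm Hs h * sqrt (post_var k sigma xs x)
       + (rkhs_norm Hs h + rkhs_norm Hd g) * sigma.
Proof.
move=> hk hs hf hg hE hh hinj hx.
have hU := @Ks_unit X k sigma t xs hk hs.
have ksym := hk.1.
pose Ks := (gram k xs + (pow sigma 2)%:M)%R.
pose v := kvec k xs x.
pose b := ((v^T) *m invmx Ks)%R.
pose F := fun (i : 'I_t) z => ksigma k sigma z (xs i).
pose kx := fun z => ksigma k sigma z x.
pose S := fun z => (\sum_i (- b ord0 i) * F i z)%R.
pose e := fun z => kx z + S z.
have hKs : forall i j, Ks i j = ksigma k sigma (xs i) (xs j).
  move=> i j; rewrite /Ks /gram /ksigma !mxE.
  case: (eqVneq i j) => [->|hij].
    rewrite mulr1n delta_eq; toR; fixeq; ring.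
  rewrite mulr0n delta_neq; first by toR; fixeq; ring.
  by move=> /hinj eij; rewrite eij eqxx in hij.
have hkx : forall i, ksigma k sigma (xs i) x = v i ord0.
  move=> i; rewrite /v /kvec mxE /ksigma delta_neq; first by rewrite ksym; ring.
  by move=> eix; apply: (hx i); rewrite eix.
have hxk : forall i, ksigma k sigma x (xs i) = v i ord0.
  move=> i; rewrite /ksigma delta_sym -[k x (xs i)]ksym; exact: hkx.
have hxx : ksigma k sigma x x = k x x + sigma ^ 2.
  by rewrite /ksigma delta_eq; ring.
have hmemF : forall i, rk_mem Hs (F i) by move=> i; exact: rk_mem_kernel Hs (xs i).
have hkxm : rk_mem Hs kx by exact: rk_mem_kernel Hs x.
have hsum : forall u, rk_mem Hs u -> rk_mem Hs S /\
    rk_ip Hs S u = (\sum_i (- b ord0 i) * rk_ip Hs (F i) u)%R.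
  move=> u hu; exact: (@sum_lin _ _ Hs x _ (index_enum 'I_t) (fun i => - b ord0 i)%R F u hmemF hu).
have hSm : rk_mem Hs S := (hsum _ hkxm).1.
have hem : rk_mem Hs e := rk_mem_add hkxm hSm.
have ip_e : forall u, rk_mem Hs u ->
    rk_ip Hs e u = rk_ip Hs kx u + (\sum_i (- b ord0 i) * rk_ip Hs (F i) u)%R.
  move=> u hu; rewrite /e (rk_ip_add_l hkxm hSm hu) (hsum u hu).2 //.
have hbK : forall i, (\sum_j b ord0 j * Ks j i)%R = v i ord0.
  move=> i.
  have : (b *m Ks)%R ord0 i = v i ord0.
    by rewrite /b -mulmxA mulVmx // mulmx1 mxE.
  by rewrite mxE.
have horth : forall i, rk_ip Hs (F i) e = 0.
  move=> i; rewrite (rk_ip_sym (hmemF i) hem) ip_e //.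
  rewrite /kx rk_reproducing // hkx.
  have -> : (\sum_j - b ord0 j * rk_ip Hs (F j) (F i))%R = (- \sum_j b ord0 j * Ks j i)%R.
    rewrite -sumrN; apply: eq_bigr => j _.
    rewrite (rk_ip_sym (hmemF j) (hmemF i)) (rk_reproducing _ (hmemF i)) mulNr; congr (- (_ * _))%R; by rewrite hKs.
  rewrite hbK; toR; fixeq; ring.
have hhe : rk_ip Hs h e = h x - post_mean k sigma xs (\col_i h (xs i)) x.
  rewrite (rk_ip_sym hh hem) ip_e // (rk_ip_sym hkxm hh) /kx rk_reproducing //.
  rewrite /post_mean -/v -/Ks -/b mxE.
  have -> : (\sum_i - b ord0 i * rk_ip Hs (F i) h)%R = (- \sum_j b ord0 j * (\col_i h (xs i)) j ord0)%R.
    rewrite -sumrN; apply: eq_bigr => j _.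
    rewrite (rk_ip_sym (hmemF j) hh) /F rk_reproducing // mxE mulNr //.
  by [].
have hee : rk_ip Hs e e = post_var k sigma xs x + sigma ^ 2.
  rewrite ip_e //.
  have -> : (\sum_i - b ord0 i * rk_ip Hs (F i) e)%R = 0.
    by rewrite big1 // => i _; rewrite horth mulr0.
  rewrite (rk_ip_sym hkxm hem) ip_e // /kx rk_reproducing // hxx.
  rewrite /post_var -/v -/Ks -/b mxE.
  have -> : (\sum_i - b ord0 i * rk_ip Hs (F i) (fun z => ksigma k sigma z x))%R
      = (- \sum_j b ord0 j * v j ord0)%R.
    rewrite -sumrN; apply: eq_bigr => j _.
    rewrite (rk_reproducing _ (hmemF j)) mulNr; congr (- (_ * _))%R; exact: hxk.
  toR; exact: aux_ee.
have hCS := @CS _ _ Hs _ _ hh hem.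
rewrite hhe hee in hCS.
have hg0 : g x = rk_ip Hd g (fun z => sigma2_delta sigma z x) by rewrite rk_reproducing.
have hgCS := @CS _ _ Hd _ _ hg (rk_mem_kernel Hd x).
have hdd : rk_ip Hd (fun z => sigma2_delta sigma z x) (fun z => sigma2_delta sigma z x) = sigma ^ 2.
  by rewrite (rk_reproducing _ (rk_mem_kernel Hd x)) /sigma2_delta delta_eq Rmult_1_r.
rewrite -hg0 hdd in hgCS.
move: hgCS; rewrite sqrt_pow2; last lra.
move=> hgCS.
apply: (@aux_final _ _ _ _ _ _ _ _ hCS hgCS (sqrt_add_sq _ _ (Rlt_le _ _ hs)) (sqrt_pos _)).
by rewrite hE.
Qed.
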